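(* Let $X$ be a topological space with a compatible metric $d$ and $T\colon X\to X$ continuous. Then $h(T)\le h^B_d(T)\le h^d(T)$.
   Context: For covers $\mathcal A,\mathcal B$ of $X$, $\mathcal A\vee\mathcal B=\{A\cap B:A\in\mathcal A,B\in\mathcal B,A\cap B\ne\emptyset\}$, $\mathcal A^n=\mathcal A\vee T^{-1}(\mathcal A)\vee\dots\vee T^{-(n-1)}(\mathcal A)$; $N(\mathcal A)$ is the least cardinality of a subcover and $N_K(\mathcal A)$ the least cardinality of a subfamily whose union contains $K$. An open cover is admissible if at least one of its elements has compact complement; $h(T)=\sup\{\lim_n\frac1n\log N(\mathcal A^n):\mathcal A\text{ admissible open cover}\}$. $d_n(x,y)=\max_{0\le j<n}d(T^jx,T^jy)$, $\mathcal B_{d_n}(\varepsilon)$ is the family of open $d_n$-balls of radius $\varepsilon$ centered at points of $X$; $h^d(T)=\sup_{\varepsilon>0}\lim_n\frac1n\log N(\mathcal B_{d_n}(\varepsilon))$ and $h^B_d(T)=\sup_{\varepsilon>0,K\text{ compact}}\limsup_n\frac1n\log N_K(\mathcal B_{d_n}(\varepsilon))$. *)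

(* Defs.v *)
From HB Require Import structures.
From mathcomp Require Import all_boot all_order all_algebra.
From mathcomp Require Import all_classical all_reals all_analysis.
Set Implicit Arguments. Unset Strict Implicit. Unset Printing Implicit Defensive.
Import Order.TTheory GRing.Theory Num.Theory.
Local Open Scope classical_set_scope.
Local Open Scope ring_scope.

Section Entropy.
Context {R : realType} {X : topologicalType}.

Definition is_metric (d : X -> X -> R) : Prop :=
  (forall x y, 0 <= d x y) /\ (forall x y, d x y = 0 <-> x = y) /\
  (forall x y, d x y = d y x) /\ (forall x y z, d x z <= d x y + d y z).

Definition metric_compatible (d : X -> X -> R) : Prop :=
  forall U : set X, open U <->
    (forall x, U x -> exists2 e : R, 0 < e & [set y | d x y < e] `<=` U).

Definition cover_join (A B : set (set X)) : set (set X) :=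
  [set C | exists U V, [/\ A U, B V, C = U `&` V & C !=set0]].

Definition cover_preimage (T : X -> X) (j : nat) (A : set (set X)) :
  set (set X) := [set iter j T @^-1` U | U in A].

Fixpoint cover_iter (T : X -> X) (A : set (set X)) (n : nat) : set (set X) :=
  match n with
  | 0 => [set setT]
  | n'.+1 => cover_join (cover_iter T A n') (cover_preimage T n' A)
  end.

(* N_K(A): least cardinality of a subfamily of A whose union contains K
   (+oo if no finite such subfamily exists) *)
Definition NK (K : set X) (A : set (set X)) : \bar R :=
  ereal_inf [set (n%:R)%:E | n in [set n : nat | exists f : 'I_n -> set X,
     (forall i, A (f i)) /\ K `<=` \bigcup_(i in setT) f i]].

Definition Ncov (A : set (set X)) : \bar R := NK setT A.

Definition elog (x : \bar R) : \bar R :=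
  match x with
  | r%:E => if 0 < r then (ln r)%:E else (-oo)%E
  | _ => x
  end.

Definition rate (u : nat -> \bar R) : \bar R :=
  limn_esup (fun n => ((n%:R)^-1)%:E * elog (u n))%E.

Definition open_cover (A : set (set X)) : Prop :=
  (forall U, A U -> open U) /\ setT `<=` \bigcup_(U in A) U.

Definition admissible (A : set (set X)) : Prop :=
  open_cover A /\ exists2 U, A U & compact (~` U).

Definition htop (T : X -> X) : \bar R :=
  ereal_sup [set rate (fun n => Ncov (cover_iter T A n)) | A in admissible].

Definition dn (d : X -> X -> R) (T : X -> X) (n : nat) (x y : X) : R :=
  \big[Num.max/0]_(j < n) d (iter j T x) (iter j T y).

Definition balls_dn (d : X -> X -> R) (T : X -> X) (n : nat) (eps : R) :
  set (set X) := [set [set y | dn d T n x y < eps] | x in setT].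

Definition hd (d : X -> X -> R) (T : X -> X) : \bar R :=
  ereal_sup [set rate (fun n => Ncov (balls_dn d T n eps)) | eps in [set e : R | 0 < e]].

Definition hBd (d : X -> X -> R) (T : X -> X) : \bar R :=
  ereal_sup [set v | exists eps : R, exists K : set X,
     [/\ 0 < eps, compact K & v = rate (fun n => NK K (balls_dn d T n eps))]].

End Entropy.

(* Main.v *)
Require Import Defs.
From HB Require Import structures.
From mathcomp Require Import all_boot all_order all_algebra.
From mathcomp Require Import all_classical all_reals all_analysis.
From mathcomp Require Import lra.
Import Order.TTheory GRing.Theory Num.Theory.
Local Open Scope classical_set_scope.
Local Open Scope ereal_scope.

Section Helpers.
Local Open Scope ring_scope.

Lemma ball_open (R : realType) (X : topologicalType) (d : X -> X -> R)
  (x : X) (e : R) :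
  is_metric d -> metric_compatible d -> open [set y | d x y < e].
Proof.
move=> [d0 [dE [dS dT]]] Hc; apply/Hc => y /= hy.
exists (e - d x y); first by rewrite subr_gt0.
move=> z /= hz; apply: (le_lt_trans (dT x y z)).
by rewrite -ltrBrDl.
Qed.

Lemma seq_min_pos (R : realType) (X : eqType) (E : X -> R) (s : seq X) :
  (forall x, 0 < E x) -> exists2 del : R, 0 < del & forall x, x \in s -> del <= E x.
Proof.
move=> Ep; elim: s => [|a s [del d0 Hd]].
  by exists 1 => //.
exists (Num.min del (E a)); first by rewrite lt_min d0 Ep.
move=> x; rewrite inE => /orP[/eqP->|xs]; first by rewrite ge_min lexx orbT.
by rewrite ge_min Hd.
Qed.

Lemma lebesgue (R : realType) (X : topologicalType) (d : X -> X -> R)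
  (K : set X) (A : set (set X)) :
  is_metric d -> metric_compatible d -> compact K ->
  (forall U, A U -> open U) -> K `<=` \bigcup_(U in A) U ->
  exists2 del : R, 0 < del & forall k, K k ->
    exists2 U, A U & forall z, d k z < del -> U z.
Proof.
move=> Hm Hc HK Ao KA.
have [d0 [dE [dS dT]]] := Hm.
have cov := proj1 (compact_near_coveringP K) HK.
have := cov nat \oo (fun i y => exists2 U, A U &
   forall z, d y z < i.+1%:R^-1 -> U z) _.
case.
- move=> x Kx.
  have [U AU Ux] := KA x Kx.
  have [e e0 He] := (proj1 (Hc U) (Ao U AU)) x Ux.
  have e20 : 0 < e / 2 by rewrite divr_gt0.
  have [N _ HN] := near_infty_natSinv_lt (PosNum e20).
  exists ([set y | d x y < e / 2], [set i | (N <= i)%N]).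
    split => /=; last by exists N.
    apply: open_nbhs_nbhs; split; first exact: ball_open.
    by rewrite /= (proj2 (dE x x) erefl).
  move=> [y i] /= [hy hi]; exists U => // z hz; apply: He => /=.
  apply: (le_lt_trans (dT x y z)); rewrite [e]splitr.
  by apply: ltrD => //; apply: (lt_trans hz); apply: HN.
move=> N _ HN; exists N.+1%:R^-1; first by rewrite invr_gt0.
by move=> k Kk; apply: (HN N (leqnn N)).
Qed.

Definition Pcov {X : topologicalType} (K : set X) (A : set (set X)) (m : nat) :=
  exists f : 'I_m -> set X, (forall i, A (f i)) /\ K `<=` \bigcup_(i in setT) f i.

Lemma NK_le (R : realType) (X : topologicalType) (K : set X) A m :
  Pcov K A m -> (@NK R X K A <= (m%:R)%:E)%E.
Proof. by move=> hP; apply: ereal_inf_lbound; exists m. Qed.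

Lemma NK_cases (R : realType) (X : topologicalType) (K : set X) A :
  @NK R X K A = +oo%E \/ exists m, Pcov K A m /\ @NK R X K A = (m%:R)%:E.
Proof.
case: (pselect (exists m, Pcov K A m)) => [hex|hno].
- right.
  have hex' : exists m, (fun m => `[< Pcov K A m >]) m.
    by case: hex => m hm; exists m; apply/asboolP.
  case: (ex_minnP hex') => m /asboolP hm hmin; exists m; split => //.
  apply/le_anti/andP; split; first exact: NK_le.
  apply: le_ereal_inf_tmp => _ [m' hm' <-]; rewrite lee_fin ler_nat.
  by apply: hmin; apply/asboolP; exact: hm'.
- left; apply/eqP; rewrite eq_le leey /=.
  apply: le_ereal_inf_tmp => y [m' hm' _]; exfalso; apply: hno.
  by exists m'; exact: hm'.
Qed.

Lemma cover_iter_mem (X : topologicalType) (T : X -> X) (A : set (set X))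
  (c : nat -> set X) n : (forall j, A (c j)) ->
  (exists y, forall j, (j < n)%N -> c j (iter j T y)) ->
  cover_iter T A n [set y | forall j, (j < n)%N -> c j (iter j T y)].
Proof.
move=> Ac; elim: n => [_|n IH [y hy]] /=.
  by apply/seteqP; split => // z _ j; rewrite ltn0.
exists [set y | forall j, (j < n)%N -> c j (iter j T y)], (iter n T @^-1` c n).
split.
- by apply: IH; exists y => j jn; apply: hy; exact: (ltn_trans jn (ltnSn n)).
- by exists (c n).
- apply/seteqP; split => z /=.
    by move=> hz; split; [move=> j jn; apply: hz; exact: (ltn_trans jn (ltnSn n))|apply: hz].
  move=> [h1 h2] j; rewrite ltnS leq_eqVlt => /orP[/eqP->|]//.
  by move=> jn; apply: h1.
- by exists y.
Qed.

Lemma Ncov_le_fin (R : realType) (X : topologicalType) (T : X -> X)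
  (A : set (set X)) n (I : finType) (c : I -> nat -> set X) (x0 : X) :
  (forall i j, A (c i j)) ->
  (forall y, exists i, forall j, (j < n)%N -> c i j (iter j T y)) ->
  (@Ncov R X (cover_iter T A n) <= (#|I|%:R)%:E)%E.
Proof.
move=> Ac Hc.
pose S i := [set y | forall j, (j < n)%N -> c i j (iter j T y)].
have [i0 hi0] := Hc x0.
pose f (k : 'I_#|I|) := if pselect (exists y, S (enum_val k) y)
  then S (enum_val k) else S i0.
apply: NK_le; exists f; split.
  move=> k; rewrite /f; destruct (pselect (exists y, S (enum_val k) y)) as [h|h].
    by apply: cover_iter_mem.
  by apply: cover_iter_mem => //; exists x0.
move=> y _; have [i hi] := Hc y.
exists (enum_rank i) => //; rewrite /f enum_rankK.
destruct (pselect (exists y, S i y)) as [h|h] => //; exfalso; apply: h; by exists y.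
Qed.

Lemma dn_le (R : realType) (X : topologicalType) (d : X -> X -> R) (T : X -> X)
  n l x y : (l < n)%N -> d (iter l T x) (iter l T y) <= dn d T n x y.
Proof.
move=> ln; rewrite /dn.
exact: (le_bigmax 0 (fun j : 'I_n => d (iter j T x) (iter j T y)) (Ordinal ln)).
Qed.

Lemma Ncov_bound (R : realType) (X : topologicalType) (d : X -> X -> R)
  (T : X -> X) (A : set (set X)) (U0 : set X) (x0 : X) (eps : R)
  (g : X -> set X) n m :
  A U0 -> (forall c, A (g c) /\ forall z, d c z < eps -> g c z) ->
  Pcov (~` U0 `|` [set x0]) (balls_dn d T n eps) m ->
  (@Ncov R X (cover_iter T A n) <= (((n * m).+1)%:R)%:E)%E.
Proof.
move=> AU0 hg [f [fB fcov]].
have hx : forall i, exists x, f i = [set y | dn d T n x y < eps].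
  by move=> i; have [x _ <-] := fB i; exists x.
have [xc hxc] := choice hx.
pose c (o : option ('I_n * 'I_m)) (j : nat) : set X :=
  match o with
  | None => U0
  | Some (j0, i) => if (j < j0)%N then U0 else g (iter (j - j0) T (xc i))
  end.
have -> : (n * m).+1 = #|{: option ('I_n * 'I_m)}|.
  by rewrite card_option card_prod !card_ord.
apply: (@Ncov_le_fin R X T A n _ c x0).
  move=> [[j0 i]|] j //=; case: ifP => _ //; exact: (hg _).1.
move=> y.
case: (pselect (exists j, (j < n)%N /\ ~ U0 (iter j T y))) => [hex|hno]; last first.
  exists None => j jn /=; apply: contrapT => nU; apply: hno; by exists j.
have hex' : exists j, (fun j => (j < n)%N && `[< ~ U0 (iter j T y) >]) j.
  by case: hex => j [jn hj]; exists j; rewrite jn; apply/asboolP.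
case: (ex_minnP hex') => j0 /andP[j0n /asboolP hj0] hmin.
have [i _ hi] := fcov (iter j0 T y) (or_introl hj0).
rewrite hxc /= in hi.
exists (Some (Ordinal j0n, i)) => j jn /=.
case: ifPn => hj.
  apply: contrapT => nU.
  have := hmin j; rewrite jn /=.
  have -> : `[< ~ U0 (iter j T y) >] = true by apply/asboolP.
  by move=> /(_ isT); rewrite leqNgt hj.
rewrite -leqNgt in hj.
apply: (hg _).2.
have -> : iter j T y = iter (j - j0) T (iter j0 T y) by rewrite -iterD subnK.
apply: le_lt_trans hi; apply: dn_le.
exact: (leq_ltn_trans (leq_subr j0 j) jn).
Qed.

End Helpers.
Section Ana.
Local Open Scope ring_scope.

Lemma elog_le (R : realType) (x y : \bar R) : (x <= y)%E -> (elog x <= elog y)%E.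
Proof.
case: x => [x| |]; case: y => [y| |] //=; rewrite ?leey ?leNye //.
- rewrite lee_fin => xy; case: ifP => x0; last exact: leNye.
  have y0 : 0 < y := lt_le_trans x0 xy.
  by rewrite y0 lee_fin ler_ln ?posrE.
Qed.

Lemma limsup_le_eps (R : realType) (u v : nat -> \bar R) :
  (forall e : R, 0 < e -> \forall n \near \oo, (u n <= v n + e%:E)%E) ->
  (limn_esup u <= limn_esup v)%E.
Proof.
move=> H; apply/lee_addgt0Pr => e e0.
rewrite !limn_esup_lim.
have [N _ HN] := H e e0.
have cv : (fun n => esups v n + e%:E)%E @ \oo --> (limn (esups v) + e%:E)%E.
  apply: cvgeD; first exact: fin_num_adde_defl.
    exact: is_cvg_esups.
  exact: cvg_cst.
rewrite -(cvg_lim _ cv) //.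
apply: lee_lim; [exact: is_cvg_esups| by apply/cvg_ex; eexists; exact: cv|].
near=> n; apply: ge_ereal_sup => _ [k /= nk <-].
apply: (le_trans (HN k _)).
  by rewrite /=; apply: leq_trans nk; near: n; exists N.
rewrite leeD2r //; apply: ereal_sup_ubound; by exists k.
Unshelve. all: by end_near. Qed.

Lemma ln_small (R : realType) (e : R) : 0 < e ->
  \forall n \near \oo, (n%:R^-1 * ln (n.+1%:R : R) <= e).
Proof.
move=> e0; near=> n.
have n1 : (1 <= n)%N by near: n; exists 1%N.
have hn : 8 / e ^+ 2 <= n%:R by near: n; exact: nbhs_infty_ger.
set s := Num.sqrt (n.+1%:R : R).
have s0 : 0 < s by rewrite sqrtr_gt0 ltr0n.
have s2 : s ^+ 2 = n%:R + 1 by rewrite sqr_sqrtr ?ler0n // -natr1.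
have lnE : ln (n.+1%:R : R) = ln s *+ 2.
  by rewrite -lnXn // s2 natr1.
have lns : ln s < s := ln_sublinear s0.
have npos : (0 : R) < n%:R by rewrite ltr0n.
have n1r : (1 : R) <= n%:R by rewrite ler1n.
have h8 : 8 <= e ^+ 2 * n%:R.
  by move: hn; rewrite mulrC ler_pdivrMl ?exprn_gt0.
rewrite ler_pdivrMl // lnE mulr2n.
set N := (n%:R : R) in npos n1r h8 s2 *.
have h1 : 8 * N <= (e * N) ^+ 2.
  by rewrite exprMn expr2 mulrA; apply: ler_wpM2r; [lra|rewrite -expr2].
have h2 : 4 * s ^+ 2 <= (e * N) ^+ 2 by rewrite s2; lra.
have h3 : 0 <= e * N by rewrite mulr_ge0 // ltW.
have h4 : s + s <= e * N by nra.
lra.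
Unshelve. all: by end_near. Qed.

Lemma rate_le (R : realType) (a b : nat -> \bar R) :
  (forall n, (0 < n)%N -> a n = +oo%E \/ exists m, (0 < m)%N /\
     a n = (m%:R)%:E /\ (b n <= (((n * m).+1)%:R)%:E)%E) ->
  (rate b <= rate a)%E.
Proof.
move=> H; apply: limsup_le_eps => e e0.
have := @ln_small R e e0; apply: filter_app; near=> n => hln.
have n0 : (0 < n)%N by near: n; exists 1%N.
have ninv : (0:R) < n%:R^-1 by rewrite invr_gt0 ltr0n.
case: (H n n0) => [-> | [m [m0 [-> hb]]]].
  by rewrite /= mulry (gtr0_sg ninv) mul1e addye // leey.
have := @elog_le R _ _ hb; rewrite /= !ltr0n m0 /=.
case E: (elog (b n)) => [r| |] //.
  rewrite !lee_fin => hr.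
  have m0r : (0:R) < m%:R by rewrite ltr0n.
  have h1 : ln ((n * m).+1%:R : R) <= ln (n.+1%:R) + ln m%:R.
    rewrite -lnM ?posrE ?ltr0n // ler_ln ?posrE ?mulr_gt0 ?ltr0n //.
    rewrite -natrM ler_nat mulSn addnC -addn1 leq_add2l; exact: m0.
  rewrite addrC; apply: (le_trans (ler_wpM2l (ltW ninv) (le_trans hr h1))).
  by rewrite mulrDr lerD2r.
by move=> _; rewrite mulrNy gtr0_sg // mul1e leNye.
Unshelve. all: by end_near. Qed.

End Ana.

Theorem proposition2p30 (R : realType) (X : topologicalType)
  (d : X -> X -> R) (T : X -> X) :
  is_metric d -> metric_compatible d -> continuous T ->
  htop T <= hBd d T /\ hBd d T <= hd d T.
Proof.
move=> Hm Hc _; have [d0 [dE [dS dT]]] := Hm; split.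
  apply: ge_ereal_sup => _ [A [[Ao Acov] [U0 AU0 hK]] <-].
  case: (pselect (exists x0 : X, True)) => [[x0 _]|hX].
    have KA : ~` U0 `<=` \bigcup_(U in A) U by move=> x _; apply: Acov.
    have [del del0 Hleb] := @lebesgue R X d _ A Hm Hc hK Ao KA.
    pose eps := (del / 2)%R.
    have eps0 : (0 < eps)%R by rewrite divr_gt0.
    have hg : forall c, exists U, A U /\ forall z, (d c z < eps)%R -> U z.
      move=> c.
      case: (pselect (exists k, (~` U0) k /\ (d c k < eps)%R)) => [[k [Kk hk]]|hno].
        have [U AU HU] := Hleb k Kk; exists U; split => // z hz; apply: HU.
        apply: (le_lt_trans (dT k c z)); rewrite dS [del]splitr.
        exact: ltrD.
      exists U0; split => // z hz; apply: contrapT => nU; apply: hno.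
      by exists z.
    have [g hg'] := choice hg.
    pose K' := ~` U0 `|` [set x0].
    have cK' : compact K' by apply: compactU => //; exact: compact_set1.
    have hub : rate (fun n => @NK R X K' (balls_dn d T n eps)) <= hBd d T.
      by apply: ereal_sup_ubound; exists eps, K'; split.
    apply: le_trans hub; apply: rate_le => n n0.
    case: (@NK_cases R X K' (balls_dn d T n eps)) => [->|[m [hP ->]]].
      by left.
    right; exists m; split; last split => //.
      rewrite lt0n; apply/negP => /eqP m0; subst m.
      case: hP => f [_ fc]; have [i _ _] := fc x0 (or_intror erefl).
      by case: i.
    exact: (@Ncov_bound R X d T A U0 x0 eps g n m AU0 hg' hP).
  have hub : rate (fun n => @NK R X set0 (balls_dn d T n 1%R)) <= hBd d T.
    by apply: ereal_sup_ubound; exists 1%R, set0; split => //; exact: compact0.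
  apply: le_trans hub; apply: limsup_le_eps => e e0; near=> n.
  have n0 : (0 < n)%N by near: n; exists 1%N.
  have ninv : (0 < n%:R^-1 :> R)%R by rewrite invr_gt0 ltr0n.
  have hP : Pcov setT (cover_iter T A n) 0.
    exists (fun _ => set0); split; first by case.
    by move=> y _; exfalso; apply: hX; exists y.
  have := @elog_le R _ _ (@NK_le R X _ _ _ hP); rewrite /= ltxx leeNy_eq => /eqP ->.
  by rewrite mulrNy gtr0_sg // mul1e leNye.
apply: ge_ereal_sup => _ [eps [K [e0 hK ->]]].
have hub : rate (fun n => @Ncov R X (balls_dn d T n eps)) <= hd d T.
  by apply: ereal_sup_ubound; exists eps.
apply: le_trans hub; apply: limsup_le_eps => e e1; apply: nearW => n.
apply: le_trans (leeDl _ _); last by rewrite lee_fin ltW.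
apply: lee_wpmul2l; first by rewrite lee_fin invr_ge0 ler0n.
apply: elog_le; apply: ereal_inf_le_tmp => _ [m [f [hf hc]] <-].
by exists m => //; exists f; split => // y _; exact: hc.
Unshelve. all: by end_near. Qed.
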